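(* Let $\mathscr V$ be a monoidal category. The forgetful (inclusion) 2-functor ${}_{\mathscr V}\mathrm{GCAT}^{\cdot\mathrm{pres}}\to{}_{\mathscr V}\mathrm{GCAT}$ has a left biadjoint whose unit components are fully faithful $\mathscr V$-graded functors that are injective on objects. More precisely, for every left $\mathscr V$-graded category $\mathscr C$ there exist a left $\mathscr V$-graded category $\mathscr C_\cdot$ with all $\mathscr V$-copowers and a $\mathscr V$-graded functor $E\colon\mathscr C\to\mathscr C_\cdot$ such that: (1) for every left $\mathscr V$-graded category $\mathscr D$ with all $\mathscr V$-copowers, the functor $(-)\circ E\colon{}_{\mathscr V}\mathrm{GCAT}^{\cdot\mathrm{pres}}(\mathscr C_\cdot,\mathscr D)\to{}_{\mathscr V}\mathrm{GCAT}(\mathscr C,\mathscr D)$ is an equivalence of categories; (2) $E$ is fully faithful and injective on objects; (3) every object of $\mathscr C_\cdot$ is a copower of some object $EA$ ($A\in\mathrm{ob}\,\mathscr C$) by some $X\in\mathrm{ob}\,\mathscr V$.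
   Context: Fix a universe SET; $\mathscr V=(\mathscr V,\otimes,I,a,\ell,r)$ is a SET-small monoidal category. A left $\mathscr V$-graded category $\mathscr C$ consists of: a set $\mathrm{ob}\,\mathscr C$; sets $\mathscr C_X(A,B)$ of graded morphisms of grade $X\in\mathrm{ob}\,\mathscr V$; reindexings $\alpha^*(f)\in\mathscr C_Y(A,B)$ for $f\in\mathscr C_X(A,B)$, $\alpha\colon Y\to X$; composites $g\circ f\in\mathscr C_{Y\otimes X}(A,C)$ for $f\in\mathscr C_X(A,B)$, $g\in\mathscr C_Y(B,C)$; identities $\mathsf i_A\in\mathscr C_I(A,A)$; subject to $1^*f=f$, $(\beta\alpha)^*f=\alpha^*\beta^*f$, $\beta^*g\circ\alpha^*f=(\beta\otimes\alpha)^*(g\circ f)$, $(h\circ g)\circ f=a^*(h\circ(g\circ f))$, $f\circ\mathsf i_A=r_X^*f$, $\mathsf i_B\circ f=\ell_X^*f$. $\mathscr V$-graded functors preserve objects' assignment, reindexing, composition, identities; they are fully faithful if each map $\mathscr C_X(A,B)\to\mathscr D_X(FA,FB)$ is bijective. A $\mathscr V$-graded natural transformation $\delta\colon F\Rightarrow G$ is a family $\delta_A\in\mathscr D_I(FA,GA)$ with $(\ell_X^{-1})^*(\delta_B\circ Ff)=(r_X^{-1})^*(Gf\circ\delta_A)$; 2-category ${}_{\mathscr V}\mathrm{GCAT}$. A copower of $A\in\mathrm{ob}\,\mathscr C$ by $X\in\mathrm{ob}\,\mathscr V$ is an object $X\cdot A$ with $\upsilon\in\mathscr C_X(A,X\cdot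 A)$ such that for all $B$, $Y$ the map $\mathscr C_Y(X\cdot A,B)\to\mathscr C_{Y\otimes X}(A,B)$, $f\mapsto f\circ\upsilon$, is bijective. A $\mathscr V$-graded functor $F$ preserves it if $(F(X\cdot A),F\upsilon)$ is a copower of $FA$ by $X$. ${}_{\mathscr V}\mathrm{GCAT}^{\cdot\mathrm{pres}}$ is the sub-2-category of ${}_{\mathscr V}\mathrm{GCAT}$ whose objects have all copowers by all objects of $\mathscr V$, whose 1-cells preserve such copowers, and with all 2-cells between them. *)

(* Defs.v *)
Set Implicit Arguments.
Unset Strict Implicit.

Record Category := {
  cob :> Type;
  chom : cob -> cob -> Type;
  cid : forall X, chom X X;
  ccomp : forall X Y Z, chom Y Z -> chom X Y -> chom X Z;
  ccomp_id_l : forall X Y (f : chom X Y), ccomp (cid Y) f = f;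
  ccomp_id_r : forall X Y (f : chom X Y), ccomp f (cid X) = f;
  ccomp_assoc : forall W X Y Z (h : chom Y Z) (g : chom X Y) (f : chom W X),
      ccomp h (ccomp g f) = ccomp (ccomp h g) f
}.
Arguments cid {c} X.
Arguments ccomp {c X Y Z} _ _.

Record MonoidalCategory := {
  mcat :> Category;
  tens : mcat -> mcat -> mcat;
  tensh : forall X X' Y Y', chom X X' -> chom Y Y' -> chom (tens X Y) (tens X' Y');
  tensh_id : forall X Y, tensh (cid X) (cid Y) = cid (tens X Y);
  tensh_comp : forall X X' X'' Y Y' Y'' (f : chom X X') (f' : chom X' X'')
      (g : chom Y Y') (g' : chom Y' Y''),
      tensh (ccomp f' f) (ccomp g' g) = ccomp (tensh f' g') (tensh f g);
  munit : mcat;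
  massoc : forall X Y Z, chom (tens (tens X Y) Z) (tens X (tens Y Z));
  massoc_inv : forall X Y Z, chom (tens X (tens Y Z)) (tens (tens X Y) Z);
  massoc_inv_l : forall X Y Z, ccomp (massoc_inv X Y Z) (massoc X Y Z) = cid _;
  massoc_inv_r : forall X Y Z, ccomp (massoc X Y Z) (massoc_inv X Y Z) = cid _;
  massoc_nat : forall X X' Y Y' Z Z' (f : chom X X') (g : chom Y Y') (h : chom Z Z'),
      ccomp (massoc X' Y' Z') (tensh (tensh f g) h)
      = ccomp (tensh f (tensh g h)) (massoc X Y Z);
  mlunit : forall X, chom (tens munit X) X;
  mlunit_inv : forall X, chom X (tens munit X);
  mlunit_inv_l : forall X, ccomp (mlunit_inv X) (mlunit X) = cid _;
  mlunit_inv_r : forall X, ccomp (mlunit X) (mlunit_inv X) = cid _;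
  mlunit_nat : forall X Y (f : chom X Y),
      ccomp (mlunit Y) (tensh (cid munit) f) = ccomp f (mlunit X);
  mrunit : forall X, chom (tens X munit) X;
  mrunit_inv : forall X, chom X (tens X munit);
  mrunit_inv_l : forall X, ccomp (mrunit_inv X) (mrunit X) = cid _;
  mrunit_inv_r : forall X, ccomp (mrunit X) (mrunit_inv X) = cid _;
  mrunit_nat : forall X Y (f : chom X Y),
      ccomp (mrunit Y) (tensh f (cid munit)) = ccomp f (mrunit X);
  pentagon : forall W X Y Z,
      ccomp (massoc W X (tens Y Z)) (massoc (tens W X) Y Z)
      = ccomp (tensh (cid W) (massoc X Y Z))
          (ccomp (massoc W (tens X Y) Z) (tensh (massoc W X Y) (cid Z)));
  triangle : forall X Y,
      ccomp (tensh (cid X) (mlunit Y)) (massoc X munit Y)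
      = tensh (mrunit X) (cid Y)
}.
Arguments tens {m} _ _.
Arguments tensh {m X X' Y Y'} _ _.
Arguments munit {m}.
Arguments massoc {m} X Y Z.
Arguments mlunit {m} X.
Arguments mlunit_inv {m} X.
Arguments mrunit {m} X.
Arguments mrunit_inv {m} X.

Record GradedCategory (V : MonoidalCategory) := {
  gob :> Type;
  (* ghom X A B = C_X(A,B), morphisms of grade X *)
  ghom : V -> gob -> gob -> Type;
  reix : forall (X Y : V) (A B : gob), chom Y X -> ghom X A B -> ghom Y A B;
  gcomp : forall (X Y : V) (A B C : gob),
      ghom Y B C -> ghom X A B -> ghom (tens Y X) A C;
  gid : forall A, ghom munit A A;
  reix_id : forall X A B (f : ghom X A B), reix (cid X) f = f;
  reix_comp : forall (X Y Z : V) A B (beta : chom Y X) (alpha : chom Z Y)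
      (f : ghom X A B), reix (ccomp beta alpha) f = reix alpha (reix beta f);
  gcomp_reix : forall (X X' Y Y' : V) A B C (alpha : chom X' X) (beta : chom Y' Y)
      (f : ghom X A B) (g : ghom Y B C),
      gcomp (reix beta g) (reix alpha f) = reix (tensh beta alpha) (gcomp g f);
  gcomp_assoc : forall (X Y Z : V) A B C D
      (f : ghom X A B) (g : ghom Y B C) (h : ghom Z C D),
      gcomp (gcomp h g) f = reix (massoc Z Y X) (gcomp h (gcomp g f));
  gcomp_id_r : forall X A B (f : ghom X A B), gcomp f (gid A) = reix (mrunit X) f;
  gcomp_id_l : forall X A B (f : ghom X A B), gcomp (gid B) f = reix (mlunit X) f
}.
Arguments ghom {V g0} X A B : rename.
Arguments reix {V g0 X Y A B} _ _ : rename.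
Arguments gcomp {V g0 X Y A B C} _ _ : rename.
Arguments gid {V g0} A : rename.

Record GradedFunctor (V : MonoidalCategory) (C D : GradedCategory V) := {
  fob :> C -> D;
  fhom : forall (X : V) (A B : C), ghom X A B -> ghom X (fob A) (fob B);
  fhom_reix : forall (X Y : V) (A B : C) (alpha : chom Y X) (f : ghom X A B),
      fhom (reix alpha f) = reix alpha (fhom f);
  fhom_comp : forall (X Y : V) (A B E : C) (f : ghom X A B) (g : ghom Y B E),
      fhom (gcomp g f) = gcomp (fhom g) (fhom f);
  fhom_id : forall A : C, fhom (gid A) = gid (fob A)
}.
Arguments fhom {V C D} g {X A B} _ : rename.

Definition gfun_comp (V : MonoidalCategory) (C D E : GradedCategory V)
  (G : GradedFunctor D E) (F : GradedFunctor C D) : GradedFunctor C E.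
Proof.
  refine {| fob := fun A => G (F A);
            fhom := fun X A B f => fhom G (fhom F f) |}.
  - intros. rewrite fhom_reix, fhom_reix. reflexivity.
  - intros. rewrite fhom_comp, fhom_comp. reflexivity.
  - intros. rewrite fhom_id, fhom_id. reflexivity.
Defined.

Definition fully_faithful (V : MonoidalCategory) (C D : GradedCategory V)
  (F : GradedFunctor C D) : Prop :=
  forall (X : V) (A B : C),
    exists g : ghom X (F A) (F B) -> ghom X A B,
      (forall f, g (fhom F f) = f) /\ (forall h, fhom F (g h) = h).

Definition injective_on_objects (V : MonoidalCategory) (C D : GradedCategory V)
  (F : GradedFunctor C D) : Prop :=
  forall A B : C, F A = F B -> A = B.

Record GradedNat (V : MonoidalCategory) (C D : GradedCategory V)
    (F G : GradedFunctor C D) := {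
  ncomp :> forall A : C, ghom munit (F A) (G A);
  nnat : forall (X : V) (A B : C) (f : ghom X A B),
      reix (mlunit_inv X) (gcomp (ncomp B) (fhom F f))
      = reix (mrunit_inv X) (gcomp (fhom G f) (ncomp A))
}.

Definition whisker (V : MonoidalCategory) (C C' D : GradedCategory V)
  (E : GradedFunctor C C') (F G : GradedFunctor C' D) (d : GradedNat F G)
  : GradedNat (gfun_comp F E) (gfun_comp G E).
Proof.
  refine (@Build_GradedNat V C D (gfun_comp F E) (gfun_comp G E) (fun A => d (E A)) _).
  intros X A B f. simpl. apply (nnat d).
Defined.

Definition nat_eq (V : MonoidalCategory) (C D : GradedCategory V)
  (F G : GradedFunctor C D) (d e : GradedNat F G) : Prop :=
  forall A : C, d A = e A.

Definition vcomp_comp (V : MonoidalCategory) (C D : GradedCategory V)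
  (F G H : GradedFunctor C D) (e : GradedNat G H) (d : GradedNat F G) (A : C)
  : ghom munit (F A) (H A) :=
  reix (mlunit_inv munit) (gcomp (e A) (d A)).

Definition nat_iso (V : MonoidalCategory) (C D : GradedCategory V)
  (F G : GradedFunctor C D) : Prop :=
  exists (d : GradedNat F G) (e : GradedNat G F),
    (forall A : C, vcomp_comp e d A = gid (F A)) /\
    (forall A : C, vcomp_comp d e A = gid (G A)).

Definition is_copower (V : MonoidalCategory) (C : GradedCategory V)
  (A : C) (X : V) (XA : C) (u : ghom X A XA) : Prop :=
  forall (B : C) (Y : V),
    exists g : ghom (tens Y X) A B -> ghom Y XA B,
      (forall f, g (gcomp f u) = f) /\ (forall h, gcomp (g h) u = h).

Definition has_copowers (V : MonoidalCategory) (C : GradedCategory V) : Prop :=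
  forall (A : C) (X : V), exists (XA : C) (u : ghom X A XA), is_copower u.

Definition preserves_copowers (V : MonoidalCategory) (C D : GradedCategory V)
  (F : GradedFunctor C D) : Prop :=
  forall (A : C) (X : V) (XA : C) (u : ghom X A XA),
    is_copower u -> is_copower (fhom F u).

(* The functor (-) o E : GCAT^pres(C', D) -> GCAT(C, D) is an equivalence of
   categories: fully faithful on 2-cells and essentially surjective. *)
Definition precomp_equivalence (V : MonoidalCategory) (C C' D : GradedCategory V)
  (E : GradedFunctor C C') : Prop :=
  (forall F G : GradedFunctor C' D, preserves_copowers F -> preserves_copowers G ->
     (forall d d' : GradedNat F G,
        nat_eq (whisker E d) (whisker E d') -> nat_eq d d') /\
     (forall e : GradedNat (gfun_comp F E) (gfun_comp G E),
        exists d : GradedNat F G, nat_eq (whisker E d) e)) /\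
  (forall H : GradedFunctor C D,
     exists F : GradedFunctor C' D, preserves_copowers F /\ nat_iso (gfun_comp F E) H).

(* Main.v *)
Require Import Defs.
From Stdlib Require Import FunctionalExtensionality PropExtensionality ProofIrrelevance ClassicalEpsilon.
Set Implicit Arguments.
Unset Strict Implicit.

Section CatL.
Context {c : Category}.
Lemma rw2 (B C D : c) (x : chom C D) (y : chom B C) (z : chom B D) :
  ccomp x y = z -> forall E (r : chom E B), ccomp x (ccomp y r) = ccomp z r.
Proof. intros H E r. rewrite ccomp_assoc, H. reflexivity. Qed.
Lemma rw3 (A B C D : c) (x : chom C D) (y : chom B C) (w : chom A B) (z : chom A D) :
  ccomp x (ccomp y w) = z -> forall E (r : chom E A), ccomp x (ccomp y (ccomp w r)) = ccomp z r.
Proof. intros H E r. rewrite (ccomp_assoc y w r), ccomp_assoc, H. reflexivity. Qed.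
Lemma cancel_r (A B C : c) (f g : chom B C) (h : chom A B) (h' : chom B A) :
  ccomp h h' = cid _ -> ccomp f h = ccomp g h -> f = g.
Proof. intros H1 H2. rewrite <- (ccomp_id_r f), <- (ccomp_id_r g), <- H1, !ccomp_assoc, H2. reflexivity. Qed.
Lemma cancel_l (A B C : c) (f g : chom A B) (h : chom B C) (h' : chom C B) :
  ccomp h' h = cid _ -> ccomp h f = ccomp h g -> f = g.
Proof. intros H1 H2. rewrite <- (ccomp_id_l f), <- (ccomp_id_l g), <- H1, <- !ccomp_assoc, H2. reflexivity. Qed.
End CatL.

Ltac nrm := repeat rewrite <- ccomp_assoc.
Ltac rwb L := first [ rewrite <- L | erewrite (rw2 ltac:(eapply eq_sym; eapply L)) | erewrite (rw3 ltac:(eapply eq_sym; eapply L)) ]; nrm.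
Ltac rwc L := first [ rewrite L | erewrite (rw2 ltac:(eapply L)) | erewrite (rw3 ltac:(eapply L)) | fail 1 "rwc failed" ]; nrm.

Section VL.
Context {V : MonoidalCategory}.
Implicit Types X Y Z W : V.

Lemma tl_comp X Y Y' Y'' (f : chom Y Y') (g : chom Y' Y'') :
  tensh (cid X) (ccomp g f) = ccomp (tensh (cid X) g) (tensh (cid X) f).
Proof. rewrite <- tensh_comp, ccomp_id_l. reflexivity. Qed.
Lemma tr_comp X Y Y' Y'' (f : chom Y Y') (g : chom Y' Y'') :
  tensh (ccomp g f) (cid X) = ccomp (tensh g (cid X)) (tensh f (cid X)).
Proof. rewrite <- tensh_comp, ccomp_id_l. reflexivity. Qed.
Lemma tsplit X X' Y Y' (f : chom X X') (g : chom Y Y') :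
  tensh f g = ccomp (tensh f (cid Y')) (tensh (cid X) g).
Proof. rewrite <- tensh_comp, ccomp_id_l, ccomp_id_r. reflexivity. Qed.
Lemma tsplit' X X' Y Y' (f : chom X X') (g : chom Y Y') :
  tensh f g = ccomp (tensh (cid X') g) (tensh f (cid Y)).
Proof. rewrite <- tensh_comp, ccomp_id_l, ccomp_id_r. reflexivity. Qed.
Lemma tmerge X X' X'' Y Y' Y'' (f : chom X X') (f' : chom X' X'')
      (g : chom Y Y') (g' : chom Y' Y'') :
      ccomp (tensh f' g') (tensh f g) = tensh (ccomp f' f) (ccomp g' g).
Proof. symmetry; apply tensh_comp. Qed.
Lemma a_nat' X X' Y Y' Z Z' (f : chom X X') (g : chom Y Y') (h : chom Z Z') :
  ccomp (massoc_inv X' Y' Z') (tensh f (tensh g h))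
  = ccomp (tensh (tensh f g) h) (massoc_inv X Y Z).
Proof.
  apply (cancel_l (h:=massoc X' Y' Z') (h' := massoc_inv X' Y' Z')); [apply massoc_inv_l|].
  rewrite ccomp_assoc, massoc_inv_r, ccomp_id_l, ccomp_assoc, massoc_nat, <- ccomp_assoc, massoc_inv_r, ccomp_id_r. reflexivity.
Qed.
Lemma l_nat' X Y (f : chom X Y) :
  ccomp (mlunit_inv Y) f = ccomp (tensh (cid munit) f) (mlunit_inv X).
Proof.
  apply (cancel_l (h:=mlunit Y) (h' := mlunit_inv Y)); [apply mlunit_inv_l|].
  rewrite ccomp_assoc, mlunit_inv_r, ccomp_id_l, ccomp_assoc, mlunit_nat, <- ccomp_assoc, mlunit_inv_r, ccomp_id_r. reflexivity.
Qed.
Lemma r_nat' X Y (f : chom X Y) :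
  ccomp (mrunit_inv Y) f = ccomp (tensh f (cid munit)) (mrunit_inv X).
Proof.
  apply (cancel_l (h:=mrunit Y) (h' := mrunit_inv Y)); [apply mrunit_inv_l|].
  rewrite ccomp_assoc, mrunit_inv_r, ccomp_id_l, ccomp_assoc, mrunit_nat, <- ccomp_assoc, mrunit_inv_r, ccomp_id_r. reflexivity.
Qed.
Lemma cancel_1l X Y (f g : chom X Y) : tensh (cid munit) f = tensh (cid munit) g -> f = g.
Proof.
  intro H. apply (cancel_r (h := mlunit X) (h' := mlunit_inv X)); [apply mlunit_inv_r|].
  rewrite <- !mlunit_nat, H. reflexivity.
Qed.
Lemma cancel_r1 X Y (f g : chom X Y) : tensh f (cid munit) = tensh g (cid munit) -> f = g.
Proof.
  intro H. apply (cancel_r (h := mrunit X) (h' := mrunit_inv X)); [apply mrunit_inv_r|].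
  rewrite <- !mrunit_nat, H. reflexivity.
Qed.

Lemma K1 X Y : ccomp (mlunit (tens X Y)) (massoc munit X Y) = tensh (mlunit X) (cid Y).
Proof.
  apply cancel_1l.
  apply (cancel_r (h := ccomp (massoc munit (tens munit X) Y) (tensh (massoc munit munit X) (cid Y)))
                  (h' := ccomp (tensh (massoc_inv munit munit X) (cid Y)) (massoc_inv munit (tens munit X) Y))).
  { nrm. rwc tmerge. rewrite massoc_inv_r, ccomp_id_l, tensh_id, ccomp_id_l. apply massoc_inv_r. }
  rewrite tl_comp. nrm. rwb pentagon. idtac.
  rwc triangle.
  rewrite <- (tensh_id X Y), <- massoc_nat.
  rewrite (ccomp_assoc (tensh (cid munit) (tensh (mlunit X) (cid Y)))), <- massoc_nat.
  rewrite <- !ccomp_assoc, <- tensh_comp, ccomp_id_l, triangle. reflexivity.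
Qed.
End VL.
Section VL2.
Context {V : MonoidalCategory}.
Implicit Types X Y Z W : V.
Lemma K2 X Y : ccomp (tensh (cid X) (mrunit Y)) (massoc X Y munit) = mrunit (tens X Y).
Proof.
  apply cancel_r1.
  apply (cancel_l (h := massoc X Y munit) (h' := massoc_inv X Y munit)); [apply massoc_inv_l|].
  rewrite tr_comp. nrm. rwc massoc_nat. rewrite <- (triangle Y munit). rewrite !tl_comp. nrm.
  rwb pentagon. rwb massoc_nat. rewrite tensh_id. rwc triangle.
  reflexivity.
Qed.
Lemma K3 : mlunit (@munit V) = mrunit munit.
Proof.
  apply cancel_r1. rewrite <- triangle, <- K1. f_equal.
  apply (cancel_l (h := mlunit munit) (h' := mlunit_inv munit)); [apply mlunit_inv_l|].
  rewrite mlunit_nat. reflexivity.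
Qed.
End VL2.
Ltac sg := match goal with |- ?g => idtac g end.
Section VL3.
Context {V : MonoidalCategory}.
Implicit Types X Y Z W : V.
Lemma K1' X Y : ccomp (tensh (mlunit X) (cid Y)) (massoc_inv munit X Y) = mlunit (tens X Y).
Proof. rewrite <- K1, <- ccomp_assoc, massoc_inv_r, ccomp_id_r. reflexivity. Qed.
Lemma K2' X Y : ccomp (mrunit (tens X Y)) (massoc_inv X Y munit) = tensh (cid X) (mrunit Y).
Proof. rewrite <- K2, <- ccomp_assoc, massoc_inv_r, ccomp_id_r. reflexivity. Qed.
Lemma tri' X Y : ccomp (tensh (mrunit X) (cid Y)) (massoc_inv X munit Y) = tensh (cid X) (mlunit Y).
Proof. rewrite <- triangle, <- ccomp_assoc, massoc_inv_r, ccomp_id_r. reflexivity. Qed.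
End VL3.

Inductive eqc {T : Type} (R : T -> T -> Prop) : T -> T -> Prop :=
| c_refl x : eqc R x x
| c_sym x y : eqc R x y -> eqc R y x
| c_trans x y z : eqc R x y -> eqc R y z -> eqc R x z
| c_step x y : R x y -> eqc R x y.

Lemma eqc_map {T U : Type} (R : T -> T -> Prop) (S : U -> U -> Prop) (f : T -> U) :
  (forall x y, R x y -> eqc S (f x) (f y)) -> forall x y, eqc R x y -> eqc S (f x) (f y).
Proof.
  intros H x y E. induction E.
  - apply c_refl.
  - apply c_sym; assumption.
  - eapply c_trans; eassumption.
  - apply H; assumption.
Qed.

Definition quot {T : Type} (R : T -> T -> Prop) : Type :=
  { P : T -> Prop | exists x, P = eqc R x }.
Definition cls {T : Type} {R : T -> T -> Prop} (x : T) : quot R :=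
  exist _ (eqc R x) (ex_intro _ x eq_refl).
Definition repr {T : Type} {R : T -> T -> Prop} (q : quot R) : T :=
  proj1_sig (constructive_indefinite_description _ (proj2_sig q)).

Lemma sig_eqP {A : Type} {P : A -> Prop} (a b : sig P) : proj1_sig a = proj1_sig b -> a = b.
Proof. destruct a as [x px], b as [y py]; simpl; intro; subst y. f_equal; apply proof_irrelevance. Qed.

Lemma cls_repr {T : Type} {R : T -> T -> Prop} (q : quot R) : cls (repr q) = q.
Proof.
  unfold repr. destruct (constructive_indefinite_description _ _) as [x Hx]. simpl.
  destruct q as [P HP]. simpl in Hx. subst P. unfold cls. f_equal. apply proof_irrelevance.
Qed.

Lemma cls_eq {T : Type} {R : T -> T -> Prop} (x y : T) : eqc R x y -> @cls T R x = cls y.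
Proof.
  intro H. unfold cls.
  assert (E : eqc R x = eqc R y).
  { apply functional_extensionality; intro z. apply propositional_extensionality; split; intro.
    - eapply c_trans; [apply c_sym; eassumption| assumption].
    - eapply c_trans; eassumption. }
  apply sig_eqP. exact E.
Qed.

Lemma cls_inv {T : Type} {R : T -> T -> Prop} (x y : T) : @cls T R x = cls y -> eqc R x y.
Proof.
  intro H. assert (E := f_equal (@proj1_sig _ _) H). simpl in E.
  rewrite E. apply c_refl.
Qed.

Lemma quot_ind' {T : Type} {R : T -> T -> Prop} (q : quot R) : exists x, q = cls x.
Proof. exists (repr q). symmetry; apply cls_repr. Qed.

Lemma repr_cls {T : Type} {R : T -> T -> Prop} (x : T) : eqc R (repr (@cls T R x)) x.
Proof. apply cls_inv. apply cls_repr. Qed.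

Definition qmap {T U : Type} {R : T -> T -> Prop} {S : U -> U -> Prop} (f : T -> U)
  (q : quot R) : quot S := cls (f (repr q)).
Lemma qmap_cls {T U : Type} {R : T -> T -> Prop} {S : U -> U -> Prop} (f : T -> U) :
  (forall x y, R x y -> eqc S (f x) (f y)) -> forall x, @qmap T U R S f (cls x) = cls (f x).
Proof. intros H x. unfold qmap. apply cls_eq. apply (eqc_map H). apply repr_cls. Qed.

Definition qmap2 {T T' U : Type} {R : T -> T -> Prop} {R' : T' -> T' -> Prop} {S : U -> U -> Prop}
  (f : T -> T' -> U) (q : quot R) (q' : quot R') : quot S := cls (f (repr q) (repr q')).
Lemma qmap2_cls {T T' U : Type} {R : T -> T -> Prop} {R' : T' -> T' -> Prop} {S : U -> U -> Prop}
  (f : T -> T' -> U) :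
  (forall x y x', R x y -> eqc S (f x x') (f y x')) ->
  (forall x x' y', R' x' y' -> eqc S (f x x') (f x y')) ->
  forall x x', @qmap2 T T' U R R' S f (cls x) (cls x') = cls (f x x').
Proof.
  intros H1 H2 x x'. unfold qmap2. apply cls_eq.
  eapply c_trans.
  - apply (eqc_map (R := R) (f := fun z => f z (repr (@cls _ R' x'))) (S := S)); [intros; apply H1; assumption|].
    apply repr_cls.
  - apply (eqc_map (R := R') (f := fun z => f x z) (S := S)); [intros; apply H2; assumption|]. apply repr_cls.
Qed.

Definition qlift {T U : Type} {R : T -> T -> Prop} (f : T -> U) (q : quot R) : U := f (repr q).
Lemma qlift_cls {T U : Type} {R : T -> T -> Prop} (f : T -> U) :
  (forall x y, R x y -> f x = f y) -> forall x, @qlift T U R f (cls x) = f x.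
Proof.
  intros H x. unfold qlift. generalize (repr_cls (R := R) x). generalize (repr (@cls _ R x)).
  intros y E. induction E.
  - reflexivity.
  - symmetry; assumption.
  - congruence.
  - apply H; assumption.
Qed.

Section GL.
Context {V : MonoidalCategory} {G : GradedCategory V}.
Lemma greix_r (X Y X' : V) (A B C : G) (al : chom X' X) (g : ghom Y B C) (f : ghom X A B) :
  gcomp g (reix al f) = reix (tensh (cid Y) al) (gcomp g f).
Proof. rewrite <- (reix_id g) at 1. apply gcomp_reix. Qed.
Lemma greix_l (X Y Y' : V) (A B C : G) (be : chom Y' Y) (g : ghom Y B C) (f : ghom X A B) :
  gcomp (reix be g) f = reix (tensh be (cid X)) (gcomp g f).
Proof. rewrite <- (reix_id f) at 1. apply gcomp_reix. Qed.
Lemma reix2 (X Y Z : V) (A B : G) (be : chom Y X) (al : chom Z Y) (f : ghom X A B) :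
  reix al (reix be f) = reix (ccomp be al) f.
Proof. symmetry; apply reix_comp. Qed.
End GL.

Section CD.
Context {V : MonoidalCategory} (C : GradedCategory V).

Record rep (Y X X' : V) (A A' : C) := mkRep { rW : V; rphi : chom (tens Y X) (tens X' rW); rf : ghom rW A A' }.
Arguments mkRep {Y X X' A A' rW} rphi rf.

Definition step (Y X X' : V) (A A' : C) (r r' : rep Y X X' A A') : Prop :=
  exists (W0 W1 : V) (al : chom W0 W1) (phi : chom (tens Y X) (tens X' W0)) (f : ghom W1 A A'),
    r = mkRep phi (reix al f) /\ r' = mkRep (ccomp (tensh (cid X') al) phi) f.

Definition Hom (Y X X' : V) (A A' : C) := quot (@step Y X X' A A').

Lemma step_cls (Y X X' : V) (A A' : C) W0 W1 (al : chom W0 W1) (phi : chom (tens Y X) (tens X' W0)) (f : ghom W1 A A') :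
  cls (R := @step Y X X' A A') (mkRep phi (reix al f)) = cls (mkRep (ccomp (tensh (cid X') al) phi) f).
Proof. apply cls_eq. apply c_step. do 5 eexists. split; reflexivity. Qed.

Definition reix_rep (Y Y' X X' : V) (A A' : C) (be : chom Y' Y) (r : rep Y X X' A A') : rep Y' X X' A A' :=
  mkRep (ccomp (rphi r) (tensh be (cid X))) (rf r).

Definition Gam (Y Y' X X' X'' W W' : V) (psi : chom (tens Y' X') (tens X'' W'))
  (phi : chom (tens Y X) (tens X' W)) : chom (tens (tens Y' Y) X) (tens X'' (tens W' W)) :=
  ccomp (massoc X'' W' W) (ccomp (tensh psi (cid W)) (ccomp (massoc_inv Y' X' W)
    (ccomp (tensh (cid Y') phi) (massoc Y' Y X)))).

Definition comp_rep (Y Y' X X' X'' : V) (A A' A'' : C) (n : rep Y' X' X'' A' A'') (m : rep Y X X' A A')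
  : rep (tens Y' Y) X X'' A A'' :=
  mkRep (Gam (rphi n) (rphi m)) (gcomp (rf n) (rf m)).

Definition id_rep (X : V) (A : C) : rep munit X X A A :=
  mkRep (rW := munit) (ccomp (mrunit_inv X) (mlunit X)) (gid A).

Lemma Gam_natr (Y Y' X X' X'' W' W W0 : V) (psi : chom (tens Y' X') (tens X'' W'))
  (phi : chom (tens Y X) (tens X' W0)) (al : chom W0 W) :
  Gam psi (ccomp (tensh (cid X') al) phi) = ccomp (tensh (cid X'') (tensh (cid W') al)) (Gam psi phi).
Proof.
  unfold Gam. rewrite tl_comp. nrm. rwc @a_nat'. rwc @tmerge. rewrite tensh_id, ccomp_id_l, ccomp_id_r.
  rewrite tsplit', <- (tensh_id X'' W'). nrm. rwc massoc_nat.
  reflexivity.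
Qed.

Lemma Gam_natl (Y Y' X X' X'' W' W0' W : V) (psi : chom (tens Y' X') (tens X'' W0'))
  (phi : chom (tens Y X) (tens X' W)) (al : chom W0' W') :
  Gam (ccomp (tensh (cid X'') al) psi) phi = ccomp (tensh (cid X'') (tensh al (cid W))) (Gam psi phi).
Proof.
  unfold Gam. rewrite tr_comp. nrm. rwc massoc_nat. reflexivity.
Qed.

Lemma Gam_reix (Y Y' Y0 Y0' X X' X'' W' W : V) (psi : chom (tens Y' X') (tens X'' W'))
  (phi : chom (tens Y X) (tens X' W)) (be : chom Y0' Y') (al : chom Y0 Y) :
  Gam (ccomp psi (tensh be (cid X'))) (ccomp phi (tensh al (cid X)))
  = ccomp (Gam psi phi) (tensh (tensh be al) (cid X)).
Proof.
  unfold Gam. nrm. rwc (massoc_nat be al (cid X)).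
  rwc (@tmerge _ _ _ _ _ _ _ be (cid Y') (tensh al (cid X)) phi). rewrite ccomp_id_l.
  rewrite (@tsplit _ _ _ _ _ be (ccomp phi (tensh al (cid X)))), <- (tensh_id X' W). nrm.
  rwc (a_nat' be (cid X') (cid W)).
  rwc (@tmerge _ _ _ _ _ _ _ (tensh be (cid X')) psi (cid W) (cid W)). rewrite ccomp_id_l.
  reflexivity.
Qed.

Definition St Y X X' A A' := @step Y X X' A A'.

Lemma reix_resp (Y Y' X X' : V) (A A' : C) (be : chom Y' Y) :
  forall x y, St x y -> eqc (@St Y' X X' A A') (reix_rep be x) (reix_rep be y).
Proof.
  intros x y [W0 [W1 [al [phi [f [-> ->]]]]]]. unfold reix_rep; simpl.
  eapply c_trans; [apply c_step; do 5 eexists; split; reflexivity|].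
  rewrite ccomp_assoc. apply c_refl.
Qed.

Lemma comp_resp_r (Y Y' X X' X'' : V) (A A' A'' : C) (n : rep Y' X' X'' A' A'') :
  forall x y, @St Y X X' A A' x y -> eqc (@St (tens Y' Y) X X'' A A'') (comp_rep n x) (comp_rep n y).
Proof.
  intros x y [W0 [W1 [al [phi [f [-> ->]]]]]]. unfold comp_rep; simpl.
  rewrite greix_r.
  eapply c_trans; [apply c_step; do 5 eexists; split; reflexivity|].
  rewrite Gam_natr. apply c_refl.
Qed.

Lemma comp_resp_l (Y Y' X X' X'' : V) (A A' A'' : C) (m : rep Y X X' A A') :
  forall x y, @St Y' X' X'' A' A'' x y -> eqc (@St (tens Y' Y) X X'' A A'') (comp_rep x m) (comp_rep y m).
Proof.
  intros x y [W0 [W1 [al [phi [f [-> ->]]]]]]. unfold comp_rep; simpl.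
  rewrite greix_l.
  eapply c_trans; [apply c_step; do 5 eexists; split; reflexivity|].
  rewrite Gam_natl. apply c_refl.
Qed.


Lemma Gam_assoc (Y Y1 Y2 X X1 X2 X3 W W1 W2 : V)
  (chi : chom (tens Y2 X2) (tens X3 W2)) (psi : chom (tens Y1 X1) (tens X2 W1))
  (phi : chom (tens Y X) (tens X1 W)) :
  ccomp (tensh (cid X3) (massoc W2 W1 W)) (Gam (Gam chi psi) phi)
  = ccomp (Gam chi (Gam psi phi)) (tensh (massoc Y2 Y1 Y) (cid X)).
Proof.
  unfold Gam. nrm. rewrite !tr_comp. nrm.
  rwb pentagon. rwc massoc_nat. rewrite tensh_id.
  do 2 f_equal.
  apply (cancel_l (h := massoc Y2 X2 (tens W1 W)) (h' := massoc_inv Y2 X2 (tens W1 W))); [apply massoc_inv_l|].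
  rwc massoc_inv_r. rewrite ccomp_id_l.
  rewrite (rw2 (pentagon Y2 X2 W1 W)). nrm. erewrite (rw2 ltac:(eapply (@tmerge _ _ _ _ _ _ _ (massoc_inv Y2 X2 W1) (massoc Y2 X2 W1) (cid W) (cid W)))).
  rewrite massoc_inv_r, ccomp_id_l, tensh_id, ccomp_id_l.
  rwc massoc_nat. rewrite !tl_comp. nrm. do 2 f_equal.
  apply (cancel_l (h := tensh (cid Y2) (massoc Y1 X1 W)) (h' := tensh (cid Y2) (massoc_inv Y1 X1 W))).
  { rewrite tmerge, massoc_inv_l, ccomp_id_l, tensh_id. reflexivity. }
  rwb (pentagon Y2 Y1 X1 W). rwc massoc_inv_r. rewrite ccomp_id_l.
  rwc (@tmerge _ _ _ _ _ _ _ (cid Y2) (cid Y2) (massoc_inv Y1 X1 W) (massoc Y1 X1 W)).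
  rewrite massoc_inv_r, ccomp_id_l, tensh_id, ccomp_id_l.
  rewrite <- (tensh_id Y2 Y1). rwc massoc_nat. f_equal. apply pentagon.
Qed.

Lemma Gam_runit (Y X X' X'' Xb W : V) (psi : chom (tens Y X'') (tens Xb W)) (th : chom (tens X X') X'') :
  ccomp (tensh (cid Xb) (mrunit W)) (Gam psi (ccomp (mrunit_inv X'') th))
  = ccomp psi (ccomp (tensh (cid Y) th) (massoc Y X X')).
Proof.
  unfold Gam. rwc @K2. rwc mrunit_nat. rwc @K2'. rwc @tmerge. rewrite ccomp_id_l.
  rwc (mrunit_inv_r X''). rewrite ccomp_id_l. reflexivity.
Qed.

Lemma Gam_lunit (Y X X' W : V) (phi : chom (tens Y X) (tens X' W)) :
  ccomp (tensh (cid X') (mlunit W)) (Gam (ccomp (mrunit_inv X') (mlunit X')) phi)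
  = ccomp phi (tensh (mlunit Y) (cid X)).
Proof.
  unfold Gam. rwc triangle. rwc @tmerge. rewrite ccomp_id_l.
  rwc (mrunit_inv_r X'). rewrite ccomp_id_l. rwc @K1'. rwc mlunit_nat. rewrite @K1. reflexivity.
Qed.

Definition Cob := (cob (mcat V) * gob C)%type.
Definition ghomC (Y : V) (P Q : Cob) := Hom Y (fst P) (fst Q) (snd P) (snd Q).
Definition reixC (X Y : V) (P Q : Cob) (be : chom Y X) (q : ghomC X P Q) : ghomC Y P Q :=
  qmap (reix_rep be) q.
Definition gcompC (X Y : V) (P Q R : Cob) (n : ghomC Y Q R) (m : ghomC X P Q) : ghomC (tens Y X) P R :=
  qmap2 (fun a b => comp_rep a b) n m.
Definition gidC (P : Cob) : ghomC munit P P := cls (id_rep (fst P) (snd P)).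

Lemma reixC_cls (X Y : V) (P Q : Cob) (be : chom Y X) r :
  reixC (P := P) (Q := Q) be (cls r) = cls (reix_rep be r).
Proof. unfold reixC. apply qmap_cls. apply reix_resp. Qed.
Lemma gcompC_cls (X Y : V) (P Q R : Cob) n m :
  gcompC (X := X) (Y := Y) (P := P) (Q := Q) (R := R) (cls n) (cls m) = cls (comp_rep n m).
Proof. unfold gcompC. apply qmap2_cls; [intros x y x' H; apply comp_resp_l; exact H | intros x x' y' H; apply comp_resp_r; exact H]. Qed.

Lemma Cd_reix_id (X : V) (P Q : Cob) (f : ghomC X P Q) : reixC (cid X) f = f.
Proof.
  destruct (quot_ind' f) as [[W phi g] ->]. rewrite reixC_cls. unfold reix_rep; simpl.
  rewrite tensh_id, ccomp_id_r. reflexivity.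
Qed.
Lemma Cd_reix_comp (X Y Z : V) (P Q : Cob) (be : chom Y X) (al : chom Z Y) (f : ghomC X P Q) :
  reixC (ccomp be al) f = reixC al (reixC be f).
Proof.
  destruct (quot_ind' f) as [[W phi g] ->]. rewrite !reixC_cls. unfold reix_rep; simpl.
  rewrite tr_comp, ccomp_assoc. reflexivity.
Qed.
Lemma Cd_gcomp_reix (X X' Y Y' : V) (P Q R : Cob) (al : chom X' X) (be : chom Y' Y)
  (f : ghomC X P Q) (g : ghomC Y Q R) :
  gcompC (reixC be g) (reixC al f) = reixC (tensh be al) (gcompC g f).
Proof.
  destruct (quot_ind' f) as [[W phi f'] ->]. destruct (quot_ind' g) as [[W' psi g'] ->].
  rewrite !reixC_cls, !gcompC_cls, reixC_cls. unfold reix_rep, comp_rep; simpl.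
  rewrite Gam_reix. reflexivity.
Qed.
Lemma Cd_gcomp_assoc (X Y Z : V) (P Q R S : Cob) (f : ghomC X P Q) (g : ghomC Y Q R) (h : ghomC Z R S) :
  gcompC (gcompC h g) f = reixC (massoc Z Y X) (gcompC h (gcompC g f)).
Proof.
  destruct (quot_ind' f) as [[W phi f'] ->]. destruct (quot_ind' g) as [[W' psi g'] ->].
  destruct (quot_ind' h) as [[W'' chi h'] ->].
  rewrite !gcompC_cls, reixC_cls. unfold reix_rep, comp_rep; simpl.
  rewrite gcomp_assoc, step_cls, Gam_assoc. reflexivity.
Qed.
Lemma Cd_gcomp_id_r (X : V) (P Q : Cob) (f : ghomC X P Q) : gcompC f (gidC P) = reixC (mrunit X) f.
Proof.
  destruct (quot_ind' f) as [[W phi f'] ->]. unfold gidC. rewrite gcompC_cls, reixC_cls.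
  unfold reix_rep, comp_rep, id_rep; simpl.
  rewrite gcomp_id_r, step_cls, Gam_runit, triangle. reflexivity.
Qed.
Lemma Cd_gcomp_id_l (X : V) (P Q : Cob) (f : ghomC X P Q) : gcompC (gidC Q) f = reixC (mlunit X) f.
Proof.
  destruct (quot_ind' f) as [[W phi f'] ->]. unfold gidC. rewrite gcompC_cls, reixC_cls.
  unfold reix_rep, comp_rep, id_rep; simpl.
  rewrite gcomp_id_l, step_cls, Gam_lunit. reflexivity.
Qed.

Definition Cd : GradedCategory V :=
  {| gob := Cob; ghom := ghomC; reix := reixC; gcomp := gcompC; gid := gidC;
     reix_id := Cd_reix_id; reix_comp := Cd_reix_comp; gcomp_reix := Cd_gcomp_reix;
     gcomp_assoc := Cd_gcomp_assoc; gcomp_id_r := Cd_gcomp_id_r; gcomp_id_l := Cd_gcomp_id_l |}.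

Definition Efob (A : C) : Cd := (munit, A).
Definition ephi (X : V) : chom (tens X munit) (tens munit X) := ccomp (mlunit_inv X) (mrunit X).
Definition Efhom (X : V) (A B : C) (f : ghom X A B) : ghom (g0 := Cd) X (Efob A) (Efob B) :=
  cls (mkRep (rW := X) (ephi X) f).

Lemma E_reix (X Y : V) (A B : C) (al : chom Y X) (f : ghom X A B) :
  Efhom (reix al f) = reix (g0 := Cd) al (Efhom f).
Proof.
  unfold Efhom; simpl. rewrite step_cls, reixC_cls. unfold reix_rep, ephi; simpl.
  rewrite ccomp_assoc, <- l_nat'. nrm. rewrite mrunit_nat. reflexivity.
Qed.

Lemma ephi_Gam (X Y : V) : Gam (ephi Y) (ephi X) = ephi (tens Y X).
Proof.
  unfold ephi, Gam.
  apply (cancel_l (h := mlunit (tens Y X)) (h' := mlunit_inv (tens Y X))); [apply mlunit_inv_l|].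
  rwc (mlunit_inv_r (tens Y X)). rewrite ccomp_id_l.
  rwc @K1. rwc @tmerge. rewrite ccomp_id_l. rwc (mlunit_inv_r Y). rewrite ccomp_id_l.
  rwc @tri'. rwc @tmerge. rewrite ccomp_id_l. rwc (mlunit_inv_r X). rewrite ccomp_id_l.
  apply K2.
Qed.

Lemma E_comp (X Y : V) (A B D : C) (f : ghom X A B) (g : ghom Y B D) :
  Efhom (gcomp g f) = gcomp (g0 := Cd) (Efhom g) (Efhom f).
Proof.
  unfold Efhom; simpl. rewrite gcompC_cls. unfold comp_rep; simpl. rewrite ephi_Gam. reflexivity.
Qed.

Lemma E_id (A : C) : Efhom (gid A) = gid (g0 := Cd) (Efob A).
Proof.
  unfold Efhom; simpl. unfold gidC, id_rep, ephi; simpl. f_equal. f_equal.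
  rewrite <- K3, mlunit_inv_l. rewrite K3, mrunit_inv_l. reflexivity.
Qed.

Definition E : GradedFunctor C Cd :=
  {| fob := Efob; fhom := Efhom; fhom_reix := E_reix; fhom_comp := E_comp; fhom_id := E_id |}.

Definition Einv_rep (X : V) (A B : C) (r : rep X munit munit A B) : ghom X A B :=
  reix (ccomp (mlunit (rW r)) (ccomp (rphi r) (mrunit_inv X))) (rf r).

Lemma E_ff : fully_faithful E.
Proof.
  intros X A B. exists (qlift (@Einv_rep X A B)).
  assert (H : forall x y, @step X munit munit A B x y -> Einv_rep x = Einv_rep y).
  { intros x y [W0 [W1 [al [phi [f [-> ->]]]]]]. unfold Einv_rep; simpl.
    rewrite reix2. f_equal. nrm. rwc @mlunit_nat. reflexivity. }
  split.
  - intro f. simpl. unfold Efhom. rewrite (qlift_cls H). unfold Einv_rep, ephi; simpl.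
    nrm. rwc (mlunit_inv_r X). rewrite ccomp_id_l, mrunit_inv_r. apply reix_id.
  - intro h. destruct (quot_ind' h) as [[W phi f] ->]. simpl. unfold Efhom.
    rewrite (qlift_cls H). unfold Einv_rep; simpl. rewrite step_cls. unfold ephi.
    f_equal. f_equal. rewrite ccomp_assoc, <- l_nat'. nrm. rewrite mrunit_inv_l, ccomp_id_r. rwc (mlunit_inv_l W). apply ccomp_id_l.
Qed.

Lemma E_inj : injective_on_objects E.
Proof. intros A B H. simpl in H. unfold Efob in H. congruence. Qed.

Definition uth (X X' X'' : V) (A : C) (th : chom (tens X X') X'') : ghom (g0 := Cd) X (X', A) (X'', A) :=
  cls (mkRep (rW := munit) (ccomp (mrunit_inv X'') th) (gid A)).

Lemma uth_copower (X X' X'' : V) (A : C) (th : chom (tens X X') X'') (th' : chom X'' (tens X X')) :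
  ccomp th th' = cid _ -> ccomp th' th = cid _ -> is_copower (uth A th).
Proof.
  intros H1 H2 [Xb Ab] Y.
  pose (gr := fun (r : rep (tens Y X) X' Xb A Ab) =>
    mkRep (ccomp (rphi r) (ccomp (massoc_inv Y X X') (tensh (cid Y) th'))) (rf r)).
  assert (Hr : forall x y, @step (tens Y X) X' Xb A Ab x y -> eqc (@step Y X'' Xb A Ab) (gr x) (gr y)).
  { intros x y [W0 [W1 [al [phi [f [-> ->]]]]]]. unfold gr; simpl.
    eapply c_trans; [apply c_step; do 5 eexists; split; reflexivity|]. rewrite ccomp_assoc. apply c_refl. }
  exists (qmap gr). split.
  - intro f. destruct (quot_ind' f) as [[W psi f'] ->]. simpl. unfold uth. rewrite gcompC_cls.
    unfold comp_rep; simpl. rewrite gcomp_id_r, step_cls, Gam_runit.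
    rewrite (qmap_cls Hr). unfold gr; simpl. f_equal. nrm.
    rwc massoc_inv_r. rewrite ccomp_id_l. rewrite tmerge, H1, ccomp_id_l, tensh_id, ccomp_id_r. reflexivity.
  - intro h. destruct (quot_ind' h) as [[W phi f'] ->]. simpl. rewrite (qmap_cls Hr). unfold uth, gr; simpl.
    rewrite gcompC_cls. unfold comp_rep; simpl. rewrite gcomp_id_r, step_cls, Gam_runit.
    f_equal. nrm. rwc @tmerge. rewrite ccomp_id_l, H2, tensh_id, ccomp_id_l, massoc_inv_l, ccomp_id_r.
    reflexivity.
Qed.

Lemma Cd_has_copowers : has_copowers Cd.
Proof.
  intros [X' A] X. exists (tens X X', A). exists (uth A (cid (tens X X'))).
  eapply uth_copower; apply ccomp_id_l.
Qed.

Definition uZ (X : V) (A : C) : ghom (g0 := Cd) X (E A) (X, A) := uth A (mrunit X).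

Lemma uZ_copower (X : V) (A : C) : is_copower (uZ X A).
Proof. eapply uth_copower; [apply mrunit_inv_r | apply mrunit_inv_l]. Qed.

Lemma Cd_gen : forall Z : Cd, exists (A : C) (X : V) (u : ghom X (E A) Z), is_copower u.
Proof. intros [X A]. exists A, X, (uZ X A). apply uZ_copower. Qed.

Lemma uZ_I (A : C) : uZ munit A = gid (g0 := Cd) (E A).
Proof. unfold uZ, uth; simpl; unfold gidC, id_rep; simpl. rewrite K3. reflexivity. Qed.

Lemma decomp (Y X X' : V) (A A' : C) (m : ghom (g0 := Cd) Y (X, A) (X', A')) :
  exists (W : V) (phi : chom (tens Y X) (tens X' W)) (f : ghom W A A'),
    gcomp (g0 := Cd) m (uZ X A) = reix (g0 := Cd) phi (gcomp (g0 := Cd) (uZ X' A') (fhom E f)).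
Proof.
  destruct (quot_ind' m) as [[W phi f] ->]. exists W, phi, f. simpl.
  unfold uZ, uth, Efhom. rewrite !gcompC_cls, reixC_cls. unfold comp_rep, reix_rep; simpl.
  rewrite gcomp_id_r, gcomp_id_l, !step_cls, Gam_runit. f_equal. f_equal.
  rewrite K2. unfold Gam, ephi. nrm. rwc triangle. rwc @tmerge.
  rwc (mrunit_inv_r X'). rewrite !ccomp_id_l. rwc @tri'. rwc @tmerge.
  rwc (mlunit_inv_r W). rewrite !ccomp_id_l. rwc @K2. rewrite mrunit_nat. reflexivity.
Qed.
End CD.

Section VL4.
Context {V : MonoidalCategory}.
Implicit Types X Y Z W : V.
Lemma tri_inv Y X : ccomp (tensh (cid Y) (mlunit X)) (ccomp (massoc Y munit X) (tensh (mrunit_inv Y) (cid X))) = cid _.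
Proof. rewrite ccomp_assoc, triangle, tmerge, mrunit_inv_r, ccomp_id_l, tensh_id. reflexivity. Qed.
Lemma K1i X Y : ccomp (massoc munit X Y) (tensh (mlunit_inv X) (cid Y)) = mlunit_inv (tens X Y).
Proof.
  apply (cancel_l (h := mlunit (tens X Y)) (h' := mlunit_inv (tens X Y))); [apply mlunit_inv_l|].
  rewrite mlunit_inv_r, ccomp_assoc, K1, tmerge, mlunit_inv_r, ccomp_id_l, tensh_id. reflexivity.
Qed.
Lemma K2i X Y : ccomp (massoc_inv X Y munit) (tensh (cid X) (mrunit_inv Y)) = mrunit_inv (tens X Y).
Proof.
  apply (cancel_l (h := mrunit (tens X Y)) (h' := mrunit_inv (tens X Y))); [apply mrunit_inv_l|].
  rewrite mrunit_inv_r, ccomp_assoc, K2', tmerge, mrunit_inv_r, ccomp_id_l, tensh_id. reflexivity.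
Qed.
Lemma K3i : mlunit_inv (@munit V) = mrunit_inv munit.
Proof.
  apply (cancel_l (h := mlunit munit) (h' := mlunit_inv munit)); [apply mlunit_inv_l|].
  rewrite mlunit_inv_r, K3, mrunit_inv_r. reflexivity.
Qed.
End VL4.

Section GG.
Context {V : MonoidalCategory} {G : GradedCategory V}.

Lemma reix_ext (X Y : V) (A B : G) (al be : chom Y X) (x : ghom X A B) : al = be -> reix al x = reix be x.
Proof. intros ->; reflexivity. Qed.
Lemma reix_inv (X Y : V) (A B : G) (al : chom Y X) (be : chom X Y) (x : ghom X A B) :
  ccomp al be = cid X -> reix be (reix al x) = x.
Proof. intro H. rewrite reix2, H. apply reix_id. Qed.
Lemma reix_solve (X Y : V) (A B : G) (al : chom Y X) (be : chom X Y) (x : ghom X A B) y :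
  reix al x = y -> ccomp al be = cid X -> x = reix be y.
Proof. intros <- H. symmetry. apply reix_inv. exact H. Qed.
Lemma gassoc' (X Y Z : V) (A B C D : G) (f : ghom X A B) (g : ghom Y B C) (h : ghom Z C D) :
  gcomp h (gcomp g f) = reix (massoc_inv Z Y X) (gcomp (gcomp h g) f).
Proof. rewrite gcomp_assoc. symmetry. apply reix_inv. apply massoc_inv_r. Qed.
Lemma cop_inj (X Y : V) (A XA B : G) (u : ghom X A XA) (h1 h2 : ghom Y XA B) :
  is_copower u -> gcomp h1 u = gcomp h2 u -> h1 = h2.
Proof.
  intros Hu E. destruct (Hu B Y) as [g [g1 g2]]. rewrite <- (g1 h1), <- (g1 h2), E. reflexivity.
Qed.

Lemma CP1 (X X' : V) (A P K : G) (u' : ghom X' A P) (u'' : ghom (tens X X') A K) (k : ghom X P K) :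
  is_copower u' -> is_copower u'' -> gcomp k u' = u'' -> is_copower k.
Proof.
  intros H1 H2 Hk B Y. destruct (H2 B Y) as [g2 [g2a g2b]].
  exists (fun h => g2 (reix (massoc_inv Y X X') (gcomp h u'))). split.
  - intro f. rewrite gcomp_assoc, Hk, reix_inv; [apply g2a | apply massoc_inv_r].
  - intro h. apply (cop_inj H1). rewrite gcomp_assoc, Hk, g2b, reix_inv; [reflexivity | apply massoc_inv_l].
Qed.

Lemma CP2 (X : V) (P K Z : G) (ka : ghom X P K) (c : ghom X P Z) (j : ghom munit Z K) (k : ghom munit K Z) :
  is_copower ka -> gcomp j c = reix (mlunit X) ka -> gcomp k ka = reix (mlunit X) c ->
  gcomp k j = reix (mlunit munit) (gid Z) -> is_copower c.
Proof.
  intros Hka Hj Hk Hkj B Y. destruct (Hka B Y) as [g [ga gb]].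
  exists (fun h => reix (mrunit_inv Y) (gcomp (g h) j)). split.
  - intro f.
    assert (E : g (gcomp f c) = reix (mrunit_inv Y) (gcomp f k)).
    { rewrite <- (ga (reix (mrunit_inv Y) (gcomp f k))). f_equal.
      rewrite greix_l, gcomp_assoc, Hk, greix_r, !reix2. symmetry. rewrite <- (reix_id (gcomp f c)) at 2.
      apply reix_ext. apply tri_inv. }
    rewrite E, greix_l, gcomp_assoc, Hkj, greix_r, gcomp_id_r, !reix2.
    rewrite <- (reix_id f) at 2. apply reix_ext. nrm. rwc @tri_inv. rewrite ccomp_id_l. apply mrunit_inv_r.
  - intro h. rewrite greix_l, gcomp_assoc, Hj, greix_r, gb, !reix2.
    rewrite <- (reix_id h) at 2. apply reix_ext. nrm. apply tri_inv.
Qed.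

Lemma CP3 (X : V) (P K Z : G) (ka : ghom X P K) (c : ghom X P Z) (j : ghom munit Z K) (k : ghom munit K Z) :
  is_copower c -> gcomp j c = reix (mlunit X) ka -> gcomp k ka = reix (mlunit X) c ->
  gcomp k j = reix (mlunit munit) (gid Z).
Proof.
  intros Hc Hj Hk. apply (cop_inj Hc).
  rewrite gcomp_assoc, Hj, greix_r, Hk, greix_l, gcomp_id_l, !reix2. apply reix_ext.
  rewrite triangle, K3. reflexivity.
Qed.
End GG.

Section NL.
Context {V : MonoidalCategory} {C' D : GradedCategory V} (F G : GradedFunctor C' D)
  (d : forall A : C', ghom munit (F A) (G A)).

Definition Pm (X : V) (A B : C') (m : ghom X A B) : ghom X (F A) (G B) :=
  reix (mlunit_inv X) (gcomp (d B) (fhom F m)).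
Definition Qm (X : V) (A B : C') (m : ghom X A B) : ghom X (F A) (G B) :=
  reix (mrunit_inv X) (gcomp (fhom G m) (d A)).
Definition NatAt (X : V) (A B : C') (m : ghom X A B) : Prop := Pm m = Qm m.

Lemma P_comp (X Y : V) (A B C0 : C') (u : ghom X A B) (m : ghom Y B C0) :
  Pm (gcomp m u) = gcomp (Pm m) (fhom F u).
Proof.
  unfold Pm. rewrite greix_l, gcomp_assoc, reix2, fhom_comp. apply reix_ext. symmetry. apply K1i.
Qed.

Lemma Q_comp (X Y : V) (A B C0 : C') (u : ghom X A B) (m : ghom Y B C0) :
  NatAt u -> Qm (gcomp m u) = gcomp (Qm m) (fhom F u).
Proof.
  unfold NatAt, Pm, Qm. intro Hu. apply reix_solve with (be := mlunit X) in Hu; [|apply mlunit_inv_l].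
  rewrite greix_l, gcomp_assoc, Hu, !greix_r, gassoc', <- fhom_comp, !reix2. apply reix_ext.
  rwc @tri_inv. rewrite ccomp_id_r. symmetry. apply K2i.
Qed.

Lemma Nat_comp (X Y : V) (A B C0 : C') (u : ghom X A B) (m : ghom Y B C0) :
  NatAt u -> NatAt m -> NatAt (gcomp m u).
Proof. intros Hu Hm. unfold NatAt. rewrite P_comp, Q_comp by exact Hu. rewrite Hm. reflexivity. Qed.

Lemma Nat_cancel (X Y : V) (A B C0 : C') (u : ghom X A B) (m : ghom Y B C0) :
  is_copower (fhom F u) -> NatAt u -> NatAt (gcomp m u) -> NatAt m.
Proof.
  intros Hc Hu Hmu. apply (cop_inj Hc). rewrite <- P_comp, <- Q_comp by exact Hu. exact Hmu.
Qed.

Lemma Nat_reix (X Y : V) (A B : C') (al : chom Y X) (m : ghom X A B) :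
  NatAt m -> NatAt (reix al m).
Proof.
  unfold NatAt, Pm, Qm. intro H.
  rewrite !fhom_reix, greix_r, greix_l, !reix2.
  transitivity (reix al (reix (mlunit_inv X) (gcomp (d B) (fhom F m)))).
  - rewrite reix2. apply reix_ext. symmetry. apply l_nat'.
  - rewrite H, reix2. apply reix_ext. apply r_nat'.
Qed.
End NL.

Section UA.
Context {V : MonoidalCategory} (C : GradedCategory V) (D : GradedCategory V).

Lemma reix_cancel (X Y : V) (A B : D) (al : chom Y X) (be : chom X Y) (x y : ghom X A B) :
  ccomp al be = cid X -> reix al x = reix al y -> x = y.
Proof. intros H E. rewrite <- (reix_inv x H), <- (reix_inv y H), E. reflexivity. Qed.

Lemma part_faithful (F G : GradedFunctor (Cd C) D) : preserves_copowers F ->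
  forall d d' : GradedNat F G, nat_eq (whisker (E C) d) (whisker (E C) d') -> nat_eq d d'.
Proof.
  intros HF d d' H [X A]. specialize (H A). simpl in H.
  apply (cop_inj (HF _ _ _ _ (uZ_copower X A))).
  apply (reix_cancel (al := mlunit_inv X) (be := mlunit X)); [apply mlunit_inv_l|].
  rewrite (nnat d), (nnat d'). simpl. rewrite H. reflexivity.
Qed.

Lemma part_full (F G : GradedFunctor (Cd C) D) : preserves_copowers F ->
  forall e : GradedNat (gfun_comp F (E C)) (gfun_comp G (E C)),
  exists d : GradedNat F G, nat_eq (whisker (E C) d) e.
Proof.
  intros HF e.
  assert (Hg : forall (X : V) (A : C), { g : ghom (tens munit X) (F (E C A)) (G (X, A)) -> ghom munit (F (X, A)) (G (X, A))
     | forall h, gcomp (g h) (fhom F (uZ X A)) = h }).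
  { intros X A. destruct (constructive_indefinite_description _ (HF _ _ _ _ (uZ_copower X A) (G (X, A)) munit)) as [g [_ g2]].
    exists g. exact g2. }
  pose (dc := fun X A => proj1_sig (Hg X A) (reix (ccomp (mrunit_inv X) (mlunit X)) (gcomp (fhom G (uZ X A)) (e A)))).
  pose (dd := fun Z : Cd C => match Z as Z0 return ghom munit (F Z0) (G Z0) with (X, A) => dc X A end).
  assert (char : forall X A, gcomp (dd (X, A)) (fhom F (uZ X A)) = reix (ccomp (mrunit_inv X) (mlunit X)) (gcomp (fhom G (uZ X A)) (e A))).
  { intros X A. simpl. unfold dc. apply (proj2_sig (Hg X A)). }
  assert (dE : forall A, dd (E C A) = e A).
  { intro A. assert (c := char munit A). rewrite uZ_I, !fhom_id, gcomp_id_r, gcomp_id_l, reix2 in c.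
    apply reix_solve with (be := mrunit_inv munit) in c; [|apply mrunit_inv_r].
    simpl in c |- *. rewrite c, reix2. rewrite <- (reix_id (e A)) at 2. apply reix_ext.
    rewrite K3. nrm. rewrite mrunit_inv_r. rewrite ccomp_id_r. apply mrunit_inv_r. }
  assert (Hu : forall X A, NatAt dd (uZ X A)).
  { intros X A. unfold NatAt, Pm, Qm. rewrite char. change (dd (Efob A)) with (dd (E C A)). rewrite dE, reix2.
    apply reix_ext. nrm. rewrite mlunit_inv_r. apply ccomp_id_r. }
  assert (HE : forall X A B (f : ghom X A B), NatAt dd (fhom (E C) f)).
  { intros X A B f. unfold NatAt, Pm, Qm. rewrite !dE. exact (nnat e f). }
  assert (Hall : forall Y (Z Z' : Cd C) (m : ghom Y Z Z'), NatAt dd m).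
  { intros Y [X A] [X' A'] m. destruct (decomp m) as [W [phi [f Hm]]].
    apply (Nat_cancel (u := uZ X A)); [apply HF, uZ_copower | apply Hu |].
    rewrite Hm. apply Nat_reix, Nat_comp; [apply HE | apply Hu]. }
  exists (Build_GradedNat (F:=F) (G:=G) (ncomp := dd) Hall). intro A. simpl. apply dE.
Qed.
End UA.

Section UC.
Context {V : MonoidalCategory} (C : GradedCategory V) (D : GradedCategory V) (HD : has_copowers D)
  (H : GradedFunctor C D).

Definition cpw (A : C) (X : V) : {XA : D | exists u : ghom X (H A) XA, is_copower u} :=
  constructive_indefinite_description _ (HD (H A) X).
Definition FobH (P : Cd C) : D := proj1_sig (cpw (snd P) (fst P)).
Definition uHs (P : Cd C) := constructive_indefinite_description _ (proj2_sig (cpw (snd P) (fst P))).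
Definition uH (P : Cd C) : ghom (fst P) (H (snd P)) (FobH P) := proj1_sig (uHs P).
Lemma uH_cop (P : Cd C) : is_copower (uH P).
Proof. exact (proj2_sig (uHs P)). Qed.
Definition gHs (P : Cd C) (B : D) (Y : V) := constructive_indefinite_description _ (uH_cop P B Y).
Definition gH (P : Cd C) (B : D) (Y : V) : ghom (tens Y (fst P)) (H (snd P)) B -> ghom Y (FobH P) B :=
  proj1_sig (gHs P B Y).
Lemma gH2 (P : Cd C) (B : D) (Y : V) h : gcomp (@gH P B Y h) (uH P) = h.
Proof. exact (proj2 (proj2_sig (gHs P B Y)) h). Qed.

Definition FH_rep (Y : V) (P Q : Cd C) (r : rep Y (fst P) (fst Q) (snd P) (snd Q)) : ghom Y (FobH P) (FobH Q) :=
  @gH P (FobH Q) Y (reix (rphi r) (gcomp (uH Q) (fhom H (rf r)))).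

Lemma FH_resp (Y : V) (P Q : Cd C) : forall x y, step x y -> @FH_rep Y P Q x = FH_rep y.
Proof.
  intros x y [W0 [W1 [al [phi [f [-> ->]]]]]]. unfold FH_rep; simpl.
  rewrite fhom_reix, greix_r, reix2. reflexivity.
Qed.

Definition FH (Y : V) (P Q : Cd C) (q : ghom (g0 := Cd C) Y P Q) : ghom Y (FobH P) (FobH Q) :=
  qlift (@FH_rep Y P Q) q.

Lemma FH_char (Y : V) (P Q : Cd C) (r : rep Y (fst P) (fst Q) (snd P) (snd Q)) :
  gcomp (FH (P := P) (Q := Q) (cls r)) (uH P) = reix (rphi r) (gcomp (uH Q) (fhom H (rf r))).
Proof. unfold FH. rewrite (qlift_cls (FH_resp (P := P) (Q := Q))). apply gH2. Qed.

Lemma FH_reix (X Y : V) (P Q : Cd C) (be : chom Y X) (q : ghom (g0 := Cd C) X P Q) :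
  FH (reix (g0 := Cd C) be q) = reix be (FH q).
Proof.
  destruct (quot_ind' q) as [r ->]. apply (cop_inj (uH_cop P)). simpl. rewrite reixC_cls.
  rewrite FH_char, greix_l, FH_char, reix2. reflexivity.
Qed.

Lemma FH_comp (X Y : V) (P Q R : Cd C) (m : ghom (g0 := Cd C) X P Q) (n : ghom (g0 := Cd C) Y Q R) :
  FH (gcomp (g0 := Cd C) n m) = gcomp (FH n) (FH m).
Proof.
  destruct (quot_ind' m) as [[W phi f] ->]. destruct (quot_ind' n) as [[W' psi g] ->].
  apply (cop_inj (uH_cop P)). simpl. rewrite gcompC_cls, FH_char. unfold comp_rep; simpl.
  rewrite gcomp_assoc, FH_char, greix_r, gassoc', FH_char, greix_l, gcomp_assoc, <- fhom_comp, !reix2.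
  apply reix_ext. unfold Gam. nrm. reflexivity.
Qed.

Lemma FH_id (P : Cd C) : FH (gid (g0 := Cd C) P) = gid (FobH P).
Proof.
  apply (cop_inj (uH_cop P)). simpl. unfold gidC. rewrite FH_char. unfold id_rep; simpl.
  rewrite fhom_id, gcomp_id_r, gcomp_id_l, reix2. apply reix_ext.
  rewrite ccomp_assoc, mrunit_inv_r. apply ccomp_id_l.
Qed.

Definition Fh : GradedFunctor (Cd C) D :=
  {| fob := FobH; fhom := FH; fhom_reix := FH_reix; fhom_comp := FH_comp; fhom_id := FH_id |}.

Lemma Fh_pres : preserves_copowers Fh.
Proof.
  intros [X' A'] X Z c Hc.
  pose (ka := uth A' (cid (tens X X'))).
  assert (Hka : is_copower (C := Cd C) ka).
  { unfold ka. eapply uth_copower; apply ccomp_id_l. }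
  destruct (Hc (tens X X', A') munit) as [gc [_ gc2]].
  destruct (Hka Z munit) as [gk [_ gk2]].
  pose (j := gc (reix (g0 := Cd C) (mlunit X) ka)). pose (k := gk (reix (g0 := Cd C) (mlunit X) c)).
  assert (Hj : gcomp (g0 := Cd C) j c = reix (g0 := Cd C) (mlunit X) ka) by apply gc2.
  assert (Hk : gcomp (g0 := Cd C) k ka = reix (g0 := Cd C) (mlunit X) c) by apply gk2.
  assert (Hkj := CP3 Hc Hj Hk).
  apply (CP2 (ka := fhom Fh ka) (j := fhom Fh j) (k := fhom Fh k)).
  - apply (CP1 (uH_cop (X', A')) (uH_cop (tens X X', A'))).
    simpl. unfold ka, uth. etransitivity; [exact (FH_char (Y := X) (P := (X', A')) (Q := (tens X X', A')) (mkRep (rW := munit) (ccomp (mrunit_inv (tens X X')) (cid (tens X X'))) (gid A')))|]. simpl. rewrite fhom_id, gcomp_id_r, reix2.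
    rewrite <- (reix_id (uH (tens X X', A'))) at 2. apply reix_ext.
    rewrite ccomp_id_r. apply mrunit_inv_r.
  - rewrite <- fhom_comp, Hj, fhom_reix. reflexivity.
  - rewrite <- fhom_comp, Hk, fhom_reix. reflexivity.
  - rewrite <- fhom_comp, Hkj, fhom_reix, fhom_id. reflexivity.
Qed.

Lemma FhE_char (X : V) (A B : C) (f : ghom X A B) :
  gcomp (fhom Fh (fhom (E C) f)) (uH (E C A)) = reix (ephi X) (gcomp (uH (E C B)) (fhom H f)).
Proof. exact (FH_char (Y := X) (P := E C A) (Q := E C B) (mkRep (rW := X) (ephi X) f)). Qed.

Definition dH (A : C) : ghom munit (FobH (E C A)) (H A) :=
  @gH (E C A) (H A) munit (reix (mlunit munit) (gid (H A))).
Lemma dH_spec (A : C) : gcomp (dH A) (uH (E C A)) = reix (mlunit munit) (gid (H A)).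
Proof. apply gH2. Qed.

Lemma Fh_iso : nat_iso (gfun_comp Fh (E C)) H.
Proof.
  assert (Hd : forall (X : V) (A B : C) (f : ghom X A B),
    reix (mlunit_inv X) (gcomp (dH B) (fhom (gfun_comp Fh (E C)) f))
    = reix (mrunit_inv X) (gcomp (fhom H f) (dH A))).
  { intros X A B f. apply (cop_inj (uH_cop (E C A))).
    change (fhom (gfun_comp Fh (E C)) f) with (fhom Fh (fhom (E C) f)).
    rewrite !greix_l, !gcomp_assoc, FhE_char, dH_spec, !greix_r, gassoc', dH_spec, greix_l,
      gcomp_id_l, gcomp_id_r, !reix2.
    apply reix_ext. simpl. rwc (triangle X munit). rwc @tmerge.
    rewrite mrunit_inv_r, ccomp_id_l, tensh_id, ccomp_id_r.
    rewrite K3. rwc @tri'. unfold ephi. rwc @tmerge. rewrite ccomp_id_l. rwc (mlunit_inv_r X).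
    rewrite ccomp_id_l. rwc @K2. rwc mrunit_nat. rwc (mlunit_inv_r X). apply ccomp_id_l. }
  assert (He : forall (X : V) (A B : C) (f : ghom X A B),
    reix (mlunit_inv X) (gcomp (uH (E C B)) (fhom H f))
    = reix (mrunit_inv X) (gcomp (fhom (gfun_comp Fh (E C)) f) (uH (E C A)))).
  { intros X A B f. change (fhom (gfun_comp Fh (E C)) f) with (fhom Fh (fhom (E C) f)). etransitivity; [|symmetry; apply f_equal; apply FhE_char]. rewrite reix2. apply reix_ext. unfold ephi. nrm.
    rewrite mrunit_inv_r. symmetry. apply ccomp_id_r. }
  exists (Build_GradedNat (F := gfun_comp Fh (E C)) (G := H) (ncomp := dH) Hd).
  exists (Build_GradedNat (F := H) (G := gfun_comp Fh (E C)) (ncomp := fun A => uH (E C A)) He).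
  split.
  - intro A. unfold vcomp_comp. simpl. apply (cop_inj (uH_cop (E C A))).
    rewrite greix_l, gcomp_assoc, dH_spec, greix_r, gcomp_id_r, gcomp_id_l, !reix2.
    apply reix_ext. simpl. rwc (triangle (m := V) munit munit). rwc @tmerge.
    rewrite <- K3, mlunit_inv_r, ccomp_id_l, tensh_id. apply ccomp_id_r.
  - intro A. unfold vcomp_comp.
    change (reix (mlunit_inv munit) (gcomp (dH A) (uH (E C A))) = gid (H A)). rewrite dH_spec. apply reix_inv. apply mlunit_inv_r.
Qed.
End UC.


Theorem proposition6p1 :
  forall (V : MonoidalCategory) (C : GradedCategory V),
  exists (Cd : GradedCategory V) (E : GradedFunctor C Cd),
    has_copowers Cd /\
    (forall D : GradedCategory V, has_copowers D -> precomp_equivalence D E) /\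
    fully_faithful E /\ injective_on_objects E /\
    (forall Z : Cd, exists (A : C) (X : V) (u : ghom X (E A) Z), is_copower u).
Proof.
  intros V C. exists (Cd C), (E C). split; [apply Cd_has_copowers|]. split.
  - intros D HD. split.
    + intros F G HF HG. split; [apply part_faithful; exact HF | apply part_full; exact HF].
    + intro H. exists (Fh HD H). split; [apply Fh_pres | apply Fh_iso].
  - split; [apply E_ff|]. split; [apply E_inj | apply Cd_gen].
Qed.
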